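(* For every integer $n\ge2$, $\gamma_{tr2}(P_2\square P_n)=\left\lceil\frac{3n}{2}\right\rceil$.
   Context: $P_m$ denotes the directed path with vertex set $\{0,1,\dots,m-1\}$ and arcs $(i,i+1)$ for $0\le i\le m-2$. The Cartesian product $D_1\square D_2$ has vertex set $V(D_1)\times V(D_2)$, with an arc from $(x_1,y_1)$ to $(x_2,y_2)$ iff either $(x_1,x_2)$ is an arc of $D_1$ and $y_1=y_2$, or $x_1=x_2$ and $(y_1,y_2)$ is an arc of $D_2$. For a digraph $D$ and positive integer $k$, a $k$-rainbow dominating function on $D$ is $f:V(D)\to\mathcal P(\{1,\dots,k\})$ such that every $v$ with $f(v)=\emptyset$ satisfies $\bigcup_{u\in N^-(v)}f(u)=\{1,\dots,k\}$, where $N^-(v)$ is the set of in-neighbors of $v$; its weight is $\sum_v|f(v)|$. It is total if additionally the subdigraph induced by $\{v:f(v)\ne\emptyset\}$ has no isolated vertex (a vertex with neither in- nor out-neighbors in it). $\gamma_{trk}(D)$ is the minimum weight of a total $k$-rainbow dominating function. *)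

(* Defs.v *)
From mathcomp Require Import all_boot.
Set Implicit Arguments. Unset Strict Implicit. Unset Printing Implicit Defensive.

(* A finite digraph is a finType V with an arc relation a : rel V
   (a u v means there is an arc u -> v).  Colours {1,...,k} are modelled by 'I_k. *)

Definition path_arc (m : nat) : rel 'I_m := fun i j => j == i.+1 :> nat.

Definition cart_arc (V1 V2 : finType) (a1 : rel V1) (a2 : rel V2) : rel (V1 * V2) :=
  fun x y => (a1 x.1 y.1 && (x.2 == y.2)) || ((x.1 == y.1) && a2 x.2 y.2).

Definition rainbow_dom (V : finType) (a : rel V) (k : nat) (f : V -> {set 'I_k}) : Prop :=
  forall v : V, f v = set0 -> \bigcup_(u | a u v) f u = [set: 'I_k].

(* total: the subdigraph induced by {v | f v <> set0} has no isolated vertex *)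
Definition total_rainbow_dom (V : finType) (a : rel V) (k : nat) (f : V -> {set 'I_k}) : Prop :=
  rainbow_dom a f /\
  forall v : V, f v != set0 ->
    exists u : V, f u != set0 /\ (a u v \/ a v u).

Definition rd_weight (V : finType) (k : nat) (f : V -> {set 'I_k}) : nat :=
  \sum_(v : V) #|f v|.

Definition is_gamma_trk (V : finType) (a : rel V) (k : nat) (g : nat) : Prop :=
  (exists f : V -> {set 'I_k}, total_rainbow_dom a f /\ rd_weight f = g) /\
  (forall f : V -> {set 'I_k}, total_rainbow_dom a f -> g <= rd_weight f).

(* Main.v *)
Require Import Defs.
From mathcomp Require Import all_boot zify.
Set Implicit Arguments. Unset Strict Implicit.


Lemma arcE N (u v : 'I_2 * 'I_N) : cart_arc (@path_arc 2) (@path_arc N) u v =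
  [&& (u.1:nat) == 0, (v.1:nat) == 1 & (u.2:nat) == v.2] ||
  (((u.1:nat) == v.1) && ((v.2:nat) == (u.2).+1)).
Proof.
case: u v => [u1 u2] [v1 v2]; rewrite /cart_arc /path_arc /=.
have := ltn_ord u1; have := ltn_ord v1.
case: u1 => [[|[|//]] ?]; case: v1 => [[|[|//]] ?] //= _ _.
Qed.

Lemma pin N (u : 'I_2 * 'I_N.+1) i j : (u.1:nat) = i -> (u.2:nat) = j -> u = (inord i, inord j).
Proof. by case: u => x y /= <- <-; rewrite !inord_val. Qed.

Lemma rb (V : finType) (a : rel V) (f : V -> {set 'I_2}) v :
  rainbow_dom a f -> f v = set0 -> forall c, exists u, a u v && (c \in f u).
Proof.
move=> H /H E c; have : c \in \bigcup_(u | a u v) f u by rewrite E inE.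
by case/bigcupP => u ? ?; exists u; apply/andP.
Qed.

Lemma cardtwo (A B : {set 'I_2}) : (forall c, c \in A \/ c \in B) -> 2 <= #|A| + #|B|.
Proof.
move=> H; have E : A :|: B = setT.
  by apply/setP => c; rewrite !inE; case: (H c) => ->; rewrite ?orbT.
have := cardsUI A B; rewrite E cardsT card_ord; lia.
Qed.

Lemma arcP N (u v : 'I_2 * 'I_N) : cart_arc (@path_arc 2) (@path_arc N) u v ->
  ((u.1:nat) = 0 /\ (v.1:nat) = 1 /\ (u.2:nat) = v.2) \/
  ((u.1:nat) = v.1 /\ (v.2:nat) = (u.2).+1).
Proof.
rewrite arcE => /orP [/and3P [/eqP ? /eqP ? /eqP ?]|/andP [/eqP ? /eqP ?]]; by [left|right].
Qed.
Lemma arith (N : nat) (a b : nat -> nat) :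
  1 <= a 0 ->
  (b 0 = 0 -> 2 <= a 0) ->
  (forall j, j.+1 < N -> a j.+1 = 0 -> 2 <= a j) ->
  (forall j, j.+1 < N -> b j.+1 = 0 -> 2 <= a j.+1 + b j) ->
  (forall j, j.+2 < N -> a j.+1 = 0 -> b j.+2 = 0 -> 1 <= b j.+1 -> 1 <= b j) ->
  forall m, m <= N -> 3 * m <= 2 * \sum_(0 <= j < m) (a j + b j).
Proof.
move=> F1 F30 F2 F3 F4 m.
elim: m {-2}m (leqnn m) => [|M IH] m Hm HmN.
  by move: Hm; rewrite leqn0 => /eqP ->; rewrite big_geq.
case: m Hm HmN => [|m] Hm HmN; first by rewrite big_geq.
have IHm := IH m ltac:(lia) ltac:(lia).
rewrite big_nat_recr //=.
case: (leqP 2 (a m + b m)) => Hw; first lia.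
case: m Hm HmN IHm Hw IH => [|m] Hm HmN IHm Hw IH.
  by case: (b 0 =P 0) => [/F30|]; lia.
have IHm1 := IH m ltac:(lia) ltac:(lia).
move: IHm; rewrite big_nat_recr //= => IHm.
case: (a m.+1 =P 0) => Ha.
  have := F2 m HmN Ha; case: (b m.+1 =P 0) => [/(F3 m HmN)|]; lia.
have Hb : b m.+1 = 0 by lia.
have := F3 m HmN Hb => H3.
case: (leqP 2 (a m + b m)) => Hw2; first lia.
case: m Hm HmN IHm Hw IH IHm1 Ha Hb H3 Hw2 => [|m] Hm HmN IHm Hw IH IHm1 Ha Hb H3 Hw2.
  case: (b 0 =P 0) => [/F30|]; lia.
have Ha2 : a m.+1 = 0 by lia.
have := F2 m (ltnW HmN) Ha2 => H2.
have := F4 m HmN Ha2 Hb ltac:(lia) => H4.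
have IHm2 := IH m ltac:(lia) ltac:(lia).
move: IHm1; rewrite big_nat_recr //= => IHm1.
lia.
Qed.

Lemma weightE N (f : 'I_2 * 'I_N.+1 -> {set 'I_2}) :
  rd_weight f = \sum_(0 <= j < N.+1) (#|f (inord 0, inord j)| + #|f (inord 1, inord j)|).
Proof.
rewrite /rd_weight (eq_bigr (fun p => #|f (p.1, p.2)|)); last by case.
rewrite -(pair_bigA _ (fun i j => #|f (i, j)|)) /= big_ord_recl big_ord_recl big_ord0 addn0.
rewrite -big_split /= big_mkord; apply: eq_bigr => j _.
by rewrite !inord_val; congr (#|f (_,_)| + #|f (_,_)|); apply/val_inj; rewrite /= inordK.
Qed.

Section L.
Variable N : nat.
Variable f : 'I_2 * 'I_N.+1 -> {set 'I_2}.
Hypothesis Hf : total_rainbow_dom (cart_arc (@path_arc 2) (@path_arc N.+1)) f.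
Let g i j := #|f (inord i, inord j)|.

Lemma emp i j : g i j = 0 -> f (inord i, inord j) = set0.
Proof. by move/eqP; rewrite cards_eq0 => /eqP. Qed.

Lemma L1 : 1 <= g 0 0.
Proof.
rewrite lt0n; apply/negP => /eqP /emp E.
have [[u1 u2] /andP [H _]] := rb Hf.1 E ord0.
move/arcP: H; rewrite /= !inordK //; lia.
Qed.

Lemma L30 : g 1 0 = 0 -> 2 <= g 0 0.
Proof.
move/emp => E; have := cardtwo (A := f (inord 0, inord 0)) (B := set0); rewrite cards0 addn0; apply => c.
have [[u1 u2] /andP [H Hc]] := rb Hf.1 E c.
move/arcP: H; rewrite /= !inordK // => H; left.
have [h1 h2] : (u1:nat) = 0 /\ (u2:nat) = 0 by lia.
by rewrite (pin (u := (u1,u2)) h1 h2) in Hc.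
Qed.

Lemma L2 j : j.+1 < N.+1 -> g 0 j.+1 = 0 -> 2 <= g 0 j.
Proof.
move=> hj /emp E; have := cardtwo (A := f (inord 0, inord j)) (B := set0); rewrite cards0 addn0; apply => c.
have [[u1 u2] /andP [H Hc]] := rb Hf.1 E c.
move/arcP: H; rewrite /= !inordK // => H; left.
have [h1 h2] : (u1:nat) = 0 /\ (u2:nat) = j by lia.
by rewrite (pin (u := (u1,u2)) h1 h2) in Hc.
Qed.

Lemma L3 j : j.+1 < N.+1 -> g 1 j.+1 = 0 -> 2 <= g 0 j.+1 + g 1 j.
Proof.
move=> hj /emp E; rewrite /g; apply: cardtwo => c.
have [[u1 u2] /andP [H Hc]] := rb Hf.1 E c.
move/arcP: H; rewrite /= !inordK // => H.
have := ltn_ord u1 => hu.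
case: H => H.
  left; have [h1 h2] : (u1:nat) = 0 /\ (u2:nat) = j.+1 by lia.
  by rewrite (pin (u := (u1,u2)) h1 h2) in Hc.
right; have [h1 h2] : (u1:nat) = 1 /\ (u2:nat) = j by lia.
by rewrite (pin (u := (u1,u2)) h1 h2) in Hc.
Qed.

Lemma L4 j : j.+2 < N.+1 -> g 0 j.+1 = 0 -> g 1 j.+2 = 0 -> 1 <= g 1 j.+1 -> 1 <= g 1 j.
Proof.
move=> hj /emp E1 /emp E2 hb.
have hne : f (inord 1, inord j.+1) != set0.
  by rewrite -cards_eq0 -lt0n.
have [[u1 u2] [Hu H]] := Hf.2 _ hne.
have := ltn_ord u1 => hu.
have hj1 : j.+1 < N.+1 by lia.
have [h1 h2] : (u1:nat) = 1 /\ (u2:nat) = j.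
  case: H => /arcP; rewrite /= !inordK // => -[[h1 [h3 h2]]|[h1 h2]]; try lia.
  - have h2' : (u2:nat) = j.+1 by lia.
    by move: Hu; rewrite (pin (u := (u1,u2)) h1 h2') E1 eqxx.
  - have h2' : (u2:nat) = j.+2 by lia.
    have h1' : (u1:nat) = 1 by lia.
    by move: Hu; rewrite (pin (u := (u1,u2)) h1' h2') E2 eqxx.
by rewrite lt0n cards_eq0 -(pin (u := (u1,u2)) h1 h2).
Qed.
End L.

Lemma sumE N : \sum_(0 <= j < N) (1 + ~~ odd j) = uphalf (3 * N).
Proof.
elim: N => [|N IH]; first by rewrite big_geq.
rewrite big_nat_recr //= IH.
have := odd_double_half N; case: (odd N) => /= H; lia.
Qed.

Definition f0 N (v : 'I_2 * 'I_N) : {set 'I_2} :=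
  if (v.1:nat) == 0 then [set ord_max] else if odd v.2 then set0 else [set ord0].

Lemma f0_total N : 1 <= N -> total_rainbow_dom (cart_arc (@path_arc 2) (@path_arc N.+1)) (@f0 N.+1).
Proof.
move=> hN; split.
  move=> [v1 v2]; rewrite /f0 /=; case: ifP => h1.
    by move/setP/(_ ord_max); rewrite !inE eqxx.
  case: ifP => ho; last by move/setP/(_ ord0); rewrite !inE eqxx.
  move=> _; apply/setP => c; rewrite inE; apply/bigcupP.
  have hv1 : (v1:nat) = 1 by have := ltn_ord v1; move/negbT: h1; lia.
  have [->|->] : c = ord0 \/ c = ord_max.
    by case: c => [[|[|//]] ?]; [left|right]; apply/val_inj.
  - have hv2 : 0 < (v2:nat) by case: (v2 : nat) ho.
    have hp : (v2:nat).-1 < N.+1 by have := ltn_ord v2; lia.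
    exists (v1, Ordinal hp).
      rewrite arcE /= hv1 /=; apply/eqP; lia.
    have ho' : odd (v2:nat).-1 = false.
      by move: ho hv2; case: (v2:nat) => [|k] //= /negbTE.
    by rewrite /f0 /= hv1 /= ho' inE.
  - exists (ord0, v2); first by rewrite arcE /= hv1 !eqxx.
    by rewrite /f0 /= inE.
move=> [v1 v2]; rewrite /f0 /=; case: ifP => h1 hne.
  case: (eqVneq (v2:nat) 0) => h2.
    exists (ord0, inord 1); split; first by rewrite /f0 /= -cards_eq0 cards1.
    by right; rewrite arcE /= inordK //= h2 h1.
  have hp : (v2:nat).-1 < N.+1 by have := ltn_ord v2; lia.
  exists (ord0, Ordinal hp); split; first by rewrite /f0 /= -cards_eq0 cards1.
  left; rewrite arcE /=; apply/orP; right; rewrite (eqP h1) eqxx /=; apply/eqP; lia.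
exists (ord0, v2); split; first by rewrite /f0 /= -cards_eq0 cards1.
have hv1 : (v1:nat) = 1 by have := ltn_ord v1; move/negbT: h1; lia.
by left; rewrite arcE /= hv1 !eqxx.
Qed.

Lemma f0_weight N : rd_weight (@f0 N.+1) = uphalf (3 * N.+1).
Proof.
rewrite weightE -sumE; apply: eq_big_nat => j /andP [_ hj].
rewrite /f0 /= !inordK // cards1 /=; case: (odd j) => /=.
  by rewrite cards0.
by rewrite cards1.
Qed.

Theorem proposition4p3 (n : nat) (hn : 2 <= n) :
  is_gamma_trk (cart_arc (@path_arc 2) (@path_arc n)) 2 (uphalf (3 * n)).
Proof.
case: n hn => [//|n] hn.
split.
  by exists (@f0 n.+1); split; [apply: f0_total | apply: f0_weight].
move=> f Hf.
have := arith (a := fun j => #|f (inord 0, inord j)|) (b := fun j => #|f (inord 1, inord j)|)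
  (L1 Hf) (@L30 _ _ Hf) (@L2 _ _ Hf) (@L3 _ _ Hf) (@L4 _ _ Hf) (leqnn n.+1).
rewrite -weightE; lia.
Qed.
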